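(* The generating series $F(q;x)=\sum_\gamma q^{\omega_{HU}(\gamma)+\omega_{DH}(\gamma)+\omega_{DU}(\gamma)+\omega_{HH}(\gamma)}x^{|\gamma|}$, where $\gamma$ ranges over all Grand Motzkin paths and $|\gamma|$ is the length, is $$F(q;x)=\frac{1+(1-q)x}{\sqrt{(1+x)\big(1-(1+2q)x-(1-q^2)x^2+(1-q)^2x^3\big)}}.$$
   Context: Steps: $U=(1,1)$, $D=(1,-1)$, $H=(1,0)$. A Grand Motzkin path of length $n$ is any lattice path from $(0,0)$ to $(n,0)$ with steps $U,D,H$. Paths are identified with words of steps, and $\omega_\alpha(\gamma)$ is the number of occurrences of the word $\alpha$ as a factor (contiguous subword, overlapping occurrences counted separately) of $\gamma$. *)

(* Defs.v *)
From HB Require Import structures.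
From mathcomp Require Import all_boot all_order all_algebra.
Set Implicit Arguments. Unset Strict Implicit. Unset Printing Implicit Defensive.
Import Order.TTheory GRing.Theory Num.Theory.

(* Steps U=(1,1), D=(1,-1), H=(1,0). *)
Inductive step := U | D | H.

Definition step_eqb (a b : step) : bool :=
  match a, b with U, U | D, D | H, H => true | _, _ => false end.
Lemma step_eqP : Equality.axiom step_eqb.
Proof. by case; case; constructor. Qed.
HB.instance Definition _ := hasDecEq.Build step step_eqP.

Definition dy (s : step) : int := match s with U => 1 | D => -1 | H => 0 end%R.

Fixpoint words (n : nat) : seq (seq step) :=
  if n is n'.+1 then [seq s :: w | s <- [:: U; D; H], w <- words n'] else [:: [::]].

Definition grand_motzkin (n : nat) : seq (seq step) :=
  [seq w <- words n | (\sum_(s <- w) dy s == 0)%R].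

(* omega_alpha(gamma): number of (possibly overlapping) occurrences of alpha
   as a contiguous factor of gamma *)
Definition omega (alpha gamma : seq step) : nat :=
  \sum_(i < size gamma) (take (size alpha) (drop i gamma) == alpha).

Definition stat (g : seq step) : nat :=
  omega [:: H; U] g + omega [:: D; H] g + omega [:: D; U] g + omega [:: H; H] g.

(* coefficient of x^n in F(q;x), a polynomial in q with integer coefficients *)
Definition Fcoef (n : nat) : {poly int} :=
  (\sum_(g <- grand_motzkin n) 'X^(stat g))%R.

Definition Fsq_coef (n : nat) : {poly int} :=
  (\sum_(i < n.+1) Fcoef i * Fcoef (n - i))%R.

Local Open Scope ring_scope.
(* Polynomials in x whose coefficients are polynomials in q *)
Definition qq : {poly {poly int}} := ('X : {poly int})%:P.
Definition xx : {poly {poly int}} := 'X.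

Definition Rad : {poly {poly int}} :=
  (1 + xx) * (1 - (1 + 2%:R * qq) * xx - (1 - qq ^+ 2) * xx ^+ 2
              + (1 - qq) ^+ 2 * xx ^+ 3).

Definition Numer : {poly {poly int}} := 1 + (1 - qq) * xx.

(* Main.v *)
Require Import Defs.
From HB Require Import structures.
From mathcomp Require Import all_boot all_order all_algebra.
From mathcomp Require Import zify ring lra.
Set Implicit Arguments. Unset Strict Implicit. Unset Printing Implicit Defensive.
Import Order.TTheory GRing.Theory Num.Theory.
Local Open Scope ring_scope.

Definition cnt (s t : step) : nat :=
  match s, t with U, _ => 0 | _, D => 0 | _, _ => 1 end.
Definition hdc s (w : seq step) : nat := if w is t :: _ then cnt s t else 0.
Fixpoint pc (w : seq step) : nat := if w is s :: w' then (hdc s w' + pc w')%N else 0.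

Lemma omega_cons a s g :
  omega a (s :: g) = ((take (size a) (s :: g) == a) + omega a g)%N.
Proof. by rewrite /omega /= big_ord_recl. Qed.

Lemma stat_pc w : stat w = pc w.
Proof.
elim: w => [|s w IH]; first by rewrite /stat /omega !big_ord0.
rewrite /stat !omega_cons /= -IH /stat.
clear IH; case: s; case: w => [|t w'] //=.
all: try case: t => /=.
all: rewrite ?take0 /=; lia.
Qed.

Definition sm (w : seq step) : int := \sum_(s <- w) dy s.
Lemma sm_cons s w : sm (s :: w) = dy s + sm w. Proof. by rewrite /sm big_cons. Qed.
Lemma sm_nil : sm [::] = 0. Proof. by rewrite /sm big_nil. Qed.
Lemma sm_cat u v : sm (u ++ v) = sm u + sm v. Proof. by rewrite /sm big_cat. Qed.

Lemma words_cat (R : nmodType) a b (f : seq step -> R) :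
  \sum_(w <- words (a + b)) f w = \sum_(u <- words a) \sum_(v <- words b) f (u ++ v).
Proof.
elim: a f => [|a IH] f; first by rewrite add0n /= big_seq1.
rewrite addSn /= !big_cat !big_nil !big_map.
by rewrite !IH.
Qed.

Lemma size_words n w : w \in words n -> size w = n.
Proof.
elim: n w => [|n IH] w /=; first by rewrite inE => /eqP->.
rewrite !mem_cat in_nil orbF => /or3P [] /mapP [v Hv ->] /=; by rewrite IH.
Qed.

Fixpoint ret (h : int) (w : seq step) : bool :=
  if w is s :: w' then (if h + dy s == 0 then w' == [::] else ret (h + dy s) w') else false.
Fixpoint fret (h : int) (w : seq step) : nat :=
  if w is s :: w' then (if h + dy s == 0 then 1%N else (fret (h + dy s) w').+1) else 0%N.
Fixpoint nonneg (h : int) (w : seq step) : bool :=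
  if w is s :: w' then (0 <= h + dy s) && nonneg (h + dy s) w' else true.
Fixpoint nonpos (h : int) (w : seq step) : bool :=
  if w is s :: w' then (h + dy s <= 0) && nonpos (h + dy s) w' else true.
Definition mot w := nonneg 0 w && (sm w == 0).
Definition mot' w := nonpos 0 w && (sm w == 0).

Lemma fret_le h w : (fret h w <= size w)%N.
Proof. elim: w h => [|s w IH] h //=; case: ifP => _ //; exact: IH. Qed.

Lemma ret_sm h u : ret h u -> h + sm u = 0.
Proof.
elim: u h => [|s u IH] h //=; rewrite sm_cons.
case: eqP => [E /eqP -> | _ /IH]; first by rewrite sm_nil addr0 E.
by rewrite addrA.
Qed.

Lemma fret_cat h u v : u ++ v != [::] -> h + sm (u ++ v) = 0 ->
  (fret h (u ++ v) == size u) = ret h u.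
Proof.
elim: u h => [|s u IH] h /=.
  by case: v => [|t v] //= _ _; case: ifP.
move=> _; rewrite sm_cons addrA => Hs.
case: (h + dy s =P 0) => E; first by case: (u) {IH Hs}.
rewrite eqSS IH //.
by apply/negP => /eqP H0; move: Hs; rewrite H0 sm_nil addr0.
Qed.

Lemma nonneg_cat h u v : nonneg h (u ++ v) = nonneg h u && nonneg (h + sm u) v.
Proof.
elim: u h => [|s u IH] h /=; first by rewrite sm_nil addr0.
by rewrite IH sm_cons addrA andbA.
Qed.
Lemma nonpos_cat h u v : nonpos h (u ++ v) = nonpos h u && nonpos (h + sm u) v.
Proof.
elim: u h => [|s u IH] h /=; first by rewrite sm_nil addr0.
by rewrite IH sm_cons addrA andbA.
Qed.

Lemma ret_up (h : int) m t : 0 <= h ->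
  ret (h + 1) (m ++ [:: t]) = [&& t == D, nonneg h m & h + sm m == 0].
Proof.
elim: m h => [|s m IH] h h0 /=.
  rewrite sm_nil addr0; case: t => /=; repeat case: eqP => ?; try done; try lia.
case: (h + 1 + dy s =P 0) => E.
  have -> : (m ++ [:: t] == [::]) = false by case: m {IH}.
  have -> : (0 <= h + dy s) = false by apply/negbTE; rewrite -ltNge; lia.
  by rewrite andbF.
have -> : h + 1 + dy s = (h + dy s) + 1 by ring.
have h1 : 0 <= h + dy s by case: s E => /=; lia.
by rewrite IH // h1 sm_cons addrA.
Qed.

Lemma ret_dn (h : int) m t : h <= 0 ->
  ret (h - 1) (m ++ [:: t]) = [&& t == U, nonpos h m & h + sm m == 0].
Proof.
elim: m h => [|s m IH] h h0 /=.
  rewrite sm_nil addr0; case: t => /=; repeat case: eqP => ?; try done; try lia.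
case: (h - 1 + dy s =P 0) => E.
  have -> : (m ++ [:: t] == [::]) = false by case: m {IH}.
  have -> : (h + dy s <= 0) = false by apply/negbTE; rewrite -ltNge; lia.
  by rewrite andbF.
have -> : h - 1 + dy s = (h + dy s) - 1 by ring.
have h1 : h + dy s <= 0 by case: s E => /=; lia.
by rewrite IH // h1 sm_cons addrA.
Qed.

Lemma words_cat' (R : nmodType) k n (f : seq step -> R) : (k <= n)%N ->
  \sum_(w <- words n) f w = \sum_(u <- words k) \sum_(v <- words (n - k)) f (u ++ v).
Proof. by move=> Hk; rewrite -{1}(subnKC Hk) words_cat. Qed.

Lemma decomp (R : nmodType) n (f : seq step -> R) : (0 < n)%N ->
  \sum_(w <- words n | sm w == 0) f w =
  \sum_(k < n.+1) \sum_(u <- words k | ret 0 u)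
     \sum_(v <- words (n - k) | sm v == 0) f (u ++ v).
Proof.
move=> n0.
transitivity (\sum_(k < n.+1) \sum_(w <- words n)
                 (if (fret 0 w == k) && (sm w == 0) then f w else 0)).
  rewrite exchange_big /= big_mkcond big_seq [RHS]big_seq /=.
  apply: eq_bigr => w /size_words Hw.
  case: (sm w == 0); last by rewrite big1 // => k _; rewrite andbF.
  rewrite (bigD1 (inord (fret 0 w))) //= inordK; last by rewrite ltnS -Hw fret_le.
  rewrite eqxx big1 ?addr0 // => k /negbTE Hk.
  suff -> : (fret 0 w == k) = false by [].
  apply/negbTE; apply: contraFN Hk => /eqP E; apply/eqP/val_inj.
  by rewrite /= inordK E // ltn_ord.
apply: eq_bigr => k _.
rewrite (words_cat' _ (ltn_ord k : (k <= n)%N)) [RHS]big_mkcond big_seq [RHS]big_seq /=.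
apply: eq_bigr => u /size_words Hu.
rewrite [X in _ = if _ then X else _]big_mkcond big_seq /=.
rewrite (_ : (if ret 0 u then _ else _) = \sum_(i <- words (n - k))
   (if ret 0 u && (sm i == 0) then f (u ++ i) else 0)); last first.
  by case: (ret 0 u) => //; rewrite big1.
rewrite [RHS]big_seq.
apply: eq_bigr => v /size_words Hv.
have Hne : u ++ v != [::].
  rewrite -size_eq0 size_cat Hu Hv subnKC -?lt0n //.
  by rewrite -ltnS ltn_ord.
case E: (sm (u ++ v) == 0).
  rewrite andbT -Hu fret_cat //; last by rewrite add0r; apply/eqP.
  case R0: (ret 0 u) => //=.
  have := ret_sm R0; rewrite add0r => Su.
  by move: E; rewrite sm_cat Su add0r => ->.
rewrite andbF; case R0: (ret 0 u) => //=.
have := ret_sm R0; rewrite add0r => Su.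
by move: E; rewrite sm_cat Su add0r => ->.
Qed.

Lemma words1_sum (R : nmodType) (F : seq step -> R) :
  \sum_(u <- words 1) F u = F [:: U] + F [:: D] + F [:: H].
Proof. by rewrite /= !big_cons !big_nil !addr0 addrA. Qed.

Lemma ret0U m t : ret 0 (U :: m ++ [:: t]) = [&& t == D, nonneg 0 m & sm m == 0].
Proof.
by rewrite /= ret_up // add0r.
Qed.

Lemma ret0D m t : ret 0 (D :: m ++ [:: t]) = [&& t == U, nonpos 0 m & sm m == 0].
Proof.
by rewrite /= ret_dn // add0r.
Qed.

Lemma ret0H m : ret 0 (H :: m) = (m == [::]).
Proof. by []. Qed.

Lemma prime_sum (R : nmodType) k (g : seq step -> R) :
  \sum_(u <- words k | ret 0 u) g u =
  (if k == 1%N then g [:: H] else 0) +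
  (if (1 < k)%N then \sum_(m <- words (k - 2))
      ((if mot m then g (U :: m ++ [:: D]) else 0) +
       (if mot' m then g (D :: m ++ [:: U]) else 0)) else 0).
Proof.
case: k => [|[|j]].
- by rewrite /= big_mkcond big_seq1 /= add0r.
- by rewrite big_mkcond words1_sum /= !add0r addr0.
rewrite big_mkcond (words_cat' _ (_ : (1 <= j.+2)%N)) // words1_sum.
rewrite (_ : (j.+2 - 1 = j + 1)%N); last by lia.
rewrite (_ : (j.+2 - 2 = j)%N); last by lia.
rewrite !words_cat /=.
rewrite [in RHS]add0r -!big_split /=.
apply: eq_bigr => m _.
have E : forall x, (m ++ [:: x] == [::]) = false by case: m.
rewrite !big_cons !big_nil !ret_up // !ret_dn // !E /= !add0r /mot /mot'.
by rewrite !addr0 ?add0r.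
Qed.

Lemma decomp2 (R : nmodType) n (f : seq step -> R) : (0 < n)%N ->
  \sum_(w <- words n | sm w == 0) f w =
  \sum_(k < n.+1)
    ((if (k == 1 :> nat) then \sum_(v <- words (n - k) | sm v == 0) f (H :: v) else 0) +
     (if (1 < k)%N then \sum_(m <- words (k - 2))
        ((if mot m then \sum_(v <- words (n - k) | sm v == 0) f (U :: m ++ D :: v) else 0) +
         (if mot' m then \sum_(v <- words (n - k) | sm v == 0) f (D :: m ++ U :: v) else 0))
      else 0)).
Proof.
move=> n0; rewrite decomp //; apply: eq_bigr => k _.
rewrite prime_sum; congr (_ + _).
case: (1 < k)%N => //; apply: eq_bigr => m _.
congr (_ + _).
all: by congr (if _ then _ else _); apply: eq_bigr => v _; rewrite /= -catA.
Qed.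

Definition W (w : seq step) : {poly int} := 'X^(pc w).

Lemma pc_catc u a v : pc (u ++ a :: v) = (pc (rcons u a) + pc (a :: v))%N.
Proof.
elim: u => [|s u IH] //=; rewrite IH addnA; congr (_ + _)%N.
by case: u {IH}.
Qed.

Lemma pc_rconsD m : pc (rcons m D) = pc m.
Proof.
elim: m => [|s m IH] //=; rewrite IH; congr (_ + _)%N.
by case: m {IH} => [|t m] //=; case: s.
Qed.

Lemma pcUmD m v : pc (U :: m ++ D :: v) = (pc m + pc (D :: v))%N.
Proof.
rewrite -cat_cons pc_catc /= pc_rconsD.
by case: (rcons m D).
Qed.

Lemma pcDmU m v : pc (D :: m ++ U :: v) = (pc (D :: m ++ [:: U]) + pc v)%N.
Proof. by rewrite -cat_cons pc_catc cats1; case: v. Qed.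

Lemma pcDH v : pc (D :: v) = pc (H :: v).
Proof. by case: v => [|t v] //; case: t. Qed.

Lemma WUmD m v : W (U :: m ++ D :: v) = W m * W (H :: v).
Proof. by rewrite /W pcUmD pcDH exprD. Qed.
Lemma WDmU m v : W (D :: m ++ U :: v) = W (D :: m ++ [:: U]) * W v.
Proof. by rewrite /W pcDmU exprD. Qed.
Lemma WHH v : W (H :: H :: v) = 'X * W (H :: v).
Proof. by rewrite /W /= exprS. Qed.
Lemma WHU v : W (H :: U :: v) = 'X * W (U :: v).
Proof. by rewrite /W /= exprS. Qed.
Lemma WHD v : W (H :: D :: v) = W (D :: v).
Proof. by rewrite /W /=. Qed.
Lemma WDH v : W (D :: H :: v) = 'X * W (H :: v).
Proof. by rewrite /W /= exprS. Qed.
Lemma WDD v : W (D :: D :: v) = W (D :: v).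
Proof. by rewrite /W /=. Qed.
Lemma WDv v : W (D :: v) = W (H :: v).
Proof. by rewrite /W pcDH. Qed.

Lemma nonneg_mono h h' w : h <= h' -> nonneg h w -> nonneg h' w.
Proof.
elim: w h h' => [|s w IH] h h' //= hh /andP [H1 H2].
apply/andP; split; first by lia.
by apply: (IH (h + dy s)) => //; lia.
Qed.
Lemma nonpos_mono h h' w : h' <= h -> nonpos h w -> nonpos h' w.
Proof.
elim: w h h' => [|s w IH] h h' //= hh /andP [H1 H2].
apply/andP; split; first by lia.
by apply: (IH (h + dy s)) => //; lia.
Qed.

Lemma motUD m v : mot m -> nonneg 0 (U :: m ++ D :: v) = nonneg 0 v.
Proof.
case/andP => Hn /eqP Hs /=; rewrite nonneg_cat /=.
have -> : 0 + dy U + sm m + dy D = 0 by rewrite Hs /=; lia.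
by rewrite (nonneg_mono _ Hn) // lexx.
Qed.

Lemma mot'DU m v : mot' m -> nonpos 0 (D :: m ++ U :: v) = nonpos 0 v.
Proof.
case/andP => Hn /eqP Hs /=; rewrite nonpos_cat /=.
have -> : 0 + dy D + sm m + dy U = 0 by rewrite Hs /=; lia.
by rewrite (nonpos_mono _ Hn) // lexx.
Qed.

Definition Fc n := \sum_(w <- words n | sm w == 0) W w.
Definition Gc n := \sum_(w <- words n | sm w == 0) W (H :: w).
Definition Mc n := \sum_(w <- words n | sm w == 0) (if nonneg 0 w then W w else 0).
Definition Mq n := \sum_(w <- words n | sm w == 0) (if nonneg 0 w then W (H :: w) else 0).
Definition Tc n := \sum_(w <- words n | sm w == 0)
                     (if nonpos 0 w then W (D :: w ++ [:: U]) else 0).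
Definition Tr n := \sum_(w <- words n | sm w == 0) (if nonpos 0 w then W (w ++ [:: U]) else 0).

Definition Bc (k : nat) : {poly int} :=
  (if k == 1%N then 1 else 0) + (if (1 < k)%N then Mc (k - 2) else 0).
Definition Cc (k : nat) : {poly int} := if (1 < k)%N then Tc (k - 2) else 0.
Definition Ic (k : nat) : {poly int} := if k == 1%N then 1 else 0.

Lemma sum_mot j (Y : {poly int}) (g : seq step -> {poly int}) :
  (forall m, mot m -> g m = W m * Y) ->
  \sum_(m <- words j) (if mot m then g m else 0) = Mc j * Y.
Proof.
move=> Hg; rewrite /Mc big_distrl [RHS]big_mkcond; apply: eq_bigr => m _ /=.
rewrite /mot andbC; case E: (sm m == 0) => //=.
by case E2: (nonneg 0 m); rewrite ?mul0r // Hg // /mot E E2.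
Qed.

Lemma sum_mot' j (Y : {poly int}) (g : seq step -> {poly int}) :
  (forall m, mot' m -> g m = W (D :: m ++ [:: U]) * Y) ->
  \sum_(m <- words j) (if mot' m then g m else 0) = Tc j * Y.
Proof.
move=> Hg; rewrite /Tc big_distrl [RHS]big_mkcond; apply: eq_bigr => m _ /=.
rewrite /mot' andbC; case E: (sm m == 0) => //=.
by case E2: (nonpos 0 m); rewrite ?mul0r // Hg // /mot' E E2.
Qed.

Lemma kform (k : nat) (A1 A2 A3 : {poly int}) Y Z :
  (if k == 1%N then A1 else 0) + (if (1 < k)%N then A2 * Y + A3 * Z else 0) =
  (if k == 1%N then A1 else 0) + (if (1 < k)%N then A2 else 0) * Y +
  (if (1 < k)%N then A3 else 0) * Z.
Proof. by case: k => [|[|k]] /=; rewrite ?mul0r ?addr0 ?add0r ?addrA. Qed.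

Lemma EF n : (0 < n)%N ->
  Fc n = \sum_(k < n.+1) (Bc k * Gc (n - k) + Cc k * Fc (n - k)).
Proof.
move=> n0; rewrite {1}/Fc decomp2 //; apply: eq_bigr => k _.
rewrite big_split /= (sum_mot _ (Y := Gc (n - k))); last first.
  by move=> m _; rewrite big_distrr; apply: eq_bigr => v _; rewrite WUmD.
rewrite (sum_mot' _ (Y := Fc (n - k))); last first.
  by move=> m _; rewrite big_distrr; apply: eq_bigr => v _; rewrite WDmU.
rewrite kform /Bc /Cc mulrDl; congr (_ + _ + _).
by case: (k == 1 :> nat); rewrite ?mul1r ?mul0r.
Qed.

Lemma EG n : (0 < n)%N ->
  Gc n = \sum_(k < n.+1) ('X * Bc k * Gc (n - k) + Cc k * Fc (n - k)).
Proof.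
move=> n0; rewrite {1}/Gc decomp2 //; apply: eq_bigr => k _.
rewrite big_split /= (sum_mot _ (Y := 'X * Gc (n - k))); last first.
  move=> m _; rewrite /Gc mulrA big_distrr; apply: eq_bigr => v _.
  by rewrite WHU WUmD mulrCA mulrA.
rewrite (sum_mot' _ (Y := Fc (n - k))); last first.
  by move=> m _; rewrite big_distrr; apply: eq_bigr => v _; rewrite WHD WDmU.
rewrite kform /Bc /Cc mulrDr mulrDl; congr (_ + _ + _).
  case: (k == 1 :> nat); rewrite ?mulr1 ?mul0r ?mulr0 //.
  by rewrite /Gc big_distrr; apply: eq_bigr => v _; rewrite WHH.
by rewrite mul0r.
by rewrite mulrCA mulrA.
Qed.

Lemma nonnegH v : nonneg 0 (H :: v) = nonneg 0 v.
Proof. by rewrite /= addr0. Qed.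
Lemma nonposH v : nonpos 0 (H :: v) = nonpos 0 v.
Proof. by rewrite /= addr0. Qed.
Lemma nonnegD v : nonneg 0 (D :: v) = false.
Proof. by []. Qed.
Lemma nonposU v : nonpos 0 (U :: v) = false.
Proof. by []. Qed.

Arguments nonneg : simpl never.
Arguments nonpos : simpl never.

Lemma EM n : (0 < n)%N -> Mc n = \sum_(k < n.+1) Bc k * Mq (n - k).
Proof.
move=> n0; rewrite {1}/Mc decomp2 //; apply: eq_bigr => k _.
rewrite big_split /= (sum_mot _ (Y := Mq (n - k))); last first.
  move=> m Hm; rewrite /Mq big_distrr; apply: eq_bigr => v _.
  by rewrite motUD // WUmD /=; case: (nonneg 0 v); rewrite ?mulr0.
rewrite (sum_mot' _ (Y := 0)); last first.
  by move=> m _; rewrite mulr0 big1 // => v _; rewrite nonnegD.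
rewrite kform /Bc mulr0 addr0 mulrDl; congr (_ + _).
case: (k == 1 :> nat); rewrite ?mul1r ?mul0r //.
Qed.

Lemma EMq n : (0 < n)%N -> Mq n = 'X * Mc n.
Proof.
move=> n0; rewrite /Mq /Mc big_distrr /= big_seq_cond [RHS]big_seq_cond.
apply: eq_bigr => w /andP [/size_words Hw _].
case: w Hw => [|t w] Hw; first by move: n0; rewrite -Hw.
clear Hw; case: t; rewrite ?nonnegD ?mulr0 //.
  case: (nonneg 0 (U :: w)); rewrite ?mulr0 //.
  by rewrite /W /= exprS.
case: (nonneg 0 (H :: w)); rewrite ?mulr0 //.
by rewrite /W /= exprS.
Qed.

Lemma ET n : (0 < n)%N ->
  Tc n = \sum_(k < n.+1) ('X * Ic k * Tc (n - k) + Cc k * Tr (n - k)).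
Proof.
move=> n0; rewrite {1}/Tc decomp2 //; apply: eq_bigr => k _.
rewrite big_split /= (sum_mot _ (Y := 0)); last first.
  by move=> m _; rewrite mulr0 big1 // => v _; rewrite nonposU.
rewrite (sum_mot' _ (Y := Tr (n - k))); last first.
  move=> m Hm; rewrite /Tr big_distrr; apply: eq_bigr => v _.
  rewrite mot'DU //= -catA /= WDD WDmU.
  by case: (nonpos 0 v); rewrite ?mulr0.
rewrite kform /Cc mulr0 addr0; congr (_ + _).
rewrite /Ic; case: (k == 1 :> nat); rewrite ?mulr1 ?mulr0 ?mul0r //.
rewrite /Tc big_distrr; apply: eq_bigr => v _.
rewrite nonposH /= WDH -WDv.
by case: (nonpos 0 v); rewrite ?mulr0.
Qed.

Lemma ETr n : (0 < n)%N ->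
  Tr n = \sum_(k < n.+1) (Ic k * Tc (n - k) + Cc k * Tr (n - k)).
Proof.
move=> n0; rewrite {1}/Tr decomp2 //; apply: eq_bigr => k _.
rewrite big_split /= (sum_mot _ (Y := 0)); last first.
  by move=> m _; rewrite mulr0 big1 // => v _; rewrite nonposU.
rewrite (sum_mot' _ (Y := Tr (n - k))); last first.
  move=> m Hm; rewrite /Tr big_distrr; apply: eq_bigr => v _.
  rewrite mot'DU //= -catA /= WDmU.
  by case: (nonpos 0 v); rewrite ?mulr0.
rewrite kform /Cc mulr0 addr0; congr (_ + _).
rewrite /Ic; case: (k == 1 :> nat); rewrite ?mul1r ?mul0r //.
Qed.

Lemma F0 : Fc 0 = 1.
Proof. by rewrite /Fc /= big_mkcond big_seq1 sm_nil eqxx /W /= expr0. Qed.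
Lemma G0 : Gc 0 = 1.
Proof. by rewrite /Gc /= big_mkcond big_seq1 sm_nil eqxx /W /= expr0. Qed.
Lemma Mq0 : Mq 0 = 1.
Proof. by rewrite /Mq /= big_mkcond big_seq1 sm_nil eqxx /W /= expr0. Qed.
Lemma M0 : Mc 0 = 1.
Proof. by rewrite /Mc /= big_mkcond big_seq1 sm_nil eqxx /W /= expr0. Qed.
Lemma T0 : Tc 0 = 'X.
Proof. by rewrite /Tc /= big_mkcond big_seq1 sm_nil eqxx /W /= expr1. Qed.
Lemma Tr0 : Tr 0 = 1.
Proof. by rewrite /Tr /= big_mkcond big_seq1 sm_nil eqxx /W /= expr0. Qed.

Section Alg.
Variable N : nat.
Definition ser (f : nat -> {poly int}) : {poly {poly int}} := \poly_(i < N.+1) f i.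
Definition z (p : {poly {poly int}}) := forall i, (i <= N)%N -> p`_i = 0.

Lemma zD p r : z p -> z r -> z (p + r).
Proof. by move=> hp hr i hi; rewrite coefD hp // hr // addr0. Qed.
Lemma zM c p : z p -> z (c * p).
Proof.
move=> hp i hi; rewrite coefM big1 // => j _; rewrite hp ?mulr0 //.
by apply: leq_trans hi; rewrite leq_subr.
Qed.
Lemma zN p : z p -> z (- p).
Proof. by move=> hp i hi; rewrite coefN hp // oppr0. Qed.
Lemma zB p r : z p -> z r -> z (p - r).
Proof. by move=> hp hr; apply: zD => //; apply: zN. Qed.
Lemma z0 : z 0. Proof. by move=> i _; rewrite coef0. Qed.
Lemma zE p r : p = r -> z r -> z p. Proof. by move=> ->. Qed.

Lemma z_cancel p u : z (p * u) -> (u`_0 = 1 \/ u`_0 = -1) -> z p.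
Proof.
move=> hz hu i; elim: i {-2}i (leqnn i) => [|i IH] j hj hjN.
  move: (hz j hjN); rewrite coefM.
  move: hj; rewrite leqn0 => /eqP ->; rewrite big_ord1 subnn.
  by case: hu => ->; rewrite ?mulr1 ?mulrN1 // => /eqP; rewrite oppr_eq0 => /eqP.
have {}IH : forall k, (k < j)%N -> p`_k = 0.
  by move=> k hk; apply: IH; [lia | lia].
move: (hz j hjN); rewrite coefM big_ord_recr /= big1 ?add0r; last first.
  by move=> k _; rewrite IH ?mul0r.
rewrite subnn.
by case: hu => ->; rewrite ?mulr1 ?mulrN1 // => /eqP; rewrite oppr_eq0 => /eqP.
Qed.

Lemma coef_ser f i : (i <= N)%N -> (ser f)`_i = f i.
Proof. by move=> hi; rewrite coef_poly ltnS hi. Qed.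

Lemma conv a b i : (i <= N)%N ->
  (ser a * ser b)`_i = \sum_(j < i.+1) a j * b (i - j)%N.
Proof.
move=> hi; rewrite coefM; apply: eq_bigr => j _.
have hj : (j <= N)%N by move: (ltn_ord j); lia.
have hij : (i - j <= N)%N by lia.
by rewrite !coef_ser.
Qed.


Notation Fp := (ser Fc). Notation Gp := (ser Gc). Notation Mp := (ser Mc).
Notation Mqp := (ser Mq). Notation Tp := (ser Tc). Notation Trp := (ser Tr).
Notation sB := (ser Bc). Notation sC := (ser Cc). Notation sI := (ser Ic).

Lemma Bc0 : Bc 0 = 0. Proof. by rewrite /Bc /= addr0. Qed.
Lemma Cc0 : Cc 0 = 0. Proof. by []. Qed.
Lemma Ic0 : Ic 0 = 0. Proof. by []. Qed.

Lemma zF : z (Fp - 1 - sB * Gp - sC * Fp).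
Proof.
move=> i hi; rewrite !coefB coef1 !conv // coef_ser //.
case: i hi => [|i] hi.
  by rewrite !big_ord1 Bc0 Cc0 F0 /=; ring.
rewrite EF // big_split /=; ring.
Qed.

Lemma zG : z (Gp - 1 - qq * (sB * Gp) - sC * Fp).
Proof.
move=> i hi; rewrite !coefB coef1 coefCM !conv // coef_ser //.
case: i hi => [|i] hi.
  by rewrite !big_ord1 Bc0 Cc0 G0 /=; ring.
rewrite EG // big_split /= big_distrr /=.
under eq_bigr do rewrite -mulrA.
ring.
Qed.

Lemma zMM : z (Mp - 1 - sB * Mqp).
Proof.
move=> i hi; rewrite !coefB coef1 !conv // coef_ser //.
case: i hi => [|i] hi.
  by rewrite !big_ord1 Bc0 M0 /=; ring.
rewrite EM //= ; ring.
Qed.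

Lemma zMq : z (Mqp - 1 - qq * (Mp - 1)).
Proof.
move=> i hi; rewrite !coefB coefCM coefB coef1 !coef_ser //.
case: i hi => [|i] hi.
  by rewrite Mq0 M0 /=; ring.
rewrite EMq //= ; ring.
Qed.

Lemma zT : z (Tp - qq - qq * (sI * Tp) - sC * Trp).
Proof.
move=> i hi; rewrite !coefB coefCM /qq coefC !conv // coef_ser //.
case: i hi => [|i] hi.
  by rewrite !big_ord1 Ic0 Cc0 T0 /=; ring.
rewrite ET // big_split /= big_distrr /=.
under eq_bigr do rewrite -mulrA.
ring.
Qed.

Lemma zTr : z (Trp - 1 - sI * Tp - sC * Trp).
Proof.
move=> i hi; rewrite !coefB coef1 !conv // coef_ser //.
case: i hi => [|i] hi.
  by rewrite !big_ord1 Ic0 Cc0 Tr0 /=; ring.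
rewrite ETr // big_split /=; ring.
Qed.

Lemma zBc : z (sB - (xx + xx ^+ 2 * Mp)).
Proof.
move=> i hi; rewrite !coefB coefD /xx coefX coefXnM coef_ser // /Bc.
case: i hi => [|[|i]] hi //=; rewrite ?subr0 ?subrr //.
rewrite coef_ser; last by lia.
by rewrite subn2 /= add0r subrr.
Qed.

Lemma zCc : z (sC - xx ^+ 2 * Tp).
Proof.
move=> i hi; rewrite !coefB /xx coefXnM coef_ser // /Cc.
case: i hi => [|[|i]] hi //=; rewrite ?subr0 ?subrr //.
rewrite coef_ser; last by lia.
by rewrite subn2 /= subrr.
Qed.

Lemma zIc : z (sI - xx).
Proof.
move=> i hi; rewrite !coefB /xx coefX coef_ser // /Ic.
by case: i hi => [|[|i]] hi //=; rewrite subrr.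
Qed.


Notation PP := (1 - qq * xx - (1 - qq) * xx ^+ 2).
Notation Bx := (xx + xx ^+ 2 * Mp).

Lemma hM : z (qq * xx ^+ 2 * Mp ^+ 2 - PP * Mp + Numer).
Proof.
apply: (zE (r := - ((Mp - 1 - sB * Mqp) + Mqp * (sB - Bx) + Bx * (Mqp - 1 - qq * (Mp - 1))))).
  by rewrite /Numer; ring.
apply/zN/zD; first apply/zD.
- exact: zMM.
- by apply/zM/zBc.
- by apply/zM/zMq.
Qed.

Lemma hTr' : z (Trp - 1 - xx * Tp - xx ^+ 2 * Tp * Trp).
Proof.
apply: (zE (r := (Trp - 1 - sI * Tp - sC * Trp) + Tp * (sI - xx) + Trp * (sC - xx ^+ 2 * Tp))).
  by ring.
apply/zD; first apply/zD.
- exact: zTr.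
- by apply/zM/zIc.
- by apply/zM/zCc.
Qed.

Lemma hT' : z (Tp - qq - qq * xx * Tp - xx ^+ 2 * Tp * Trp).
Proof.
apply: (zE (r := (Tp - qq - qq * (sI * Tp) - sC * Trp) + qq * Tp * (sI - xx) + Trp * (sC - xx ^+ 2 * Tp))).
  by ring.
apply/zD; first apply/zD.
- exact: zT.
- by apply/zM/zIc.
- by apply/zM/zCc.
Qed.

Lemma hT2 : z (Numer * xx ^+ 2 * Tp ^+ 2 - PP * Tp + qq).
Proof.
apply: (zE (r := - ((Tp - qq - qq * xx * Tp - xx ^+ 2 * Tp * Trp) +
   xx ^+ 2 * Tp * ((Trp - 1 - xx * Tp - xx ^+ 2 * Tp * Trp) - (Tp - qq - qq * xx * Tp - xx ^+ 2 * Tp * Trp))))).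
  by rewrite /Numer; ring.
apply/zN/zD; first exact: hT'.
by apply/zM/zB; [exact: hTr' | exact: hT'].
Qed.

Lemma hqT : z (qq * Mp - Numer * Tp).
Proof.
apply: (@z_cancel _ (xx ^+ 2 * (qq * Mp + Numer * Tp) - PP)).
  apply: (zE (r := qq * (qq * xx ^+ 2 * Mp ^+ 2 - PP * Mp + Numer) -
                   Numer * (Numer * xx ^+ 2 * Tp ^+ 2 - PP * Tp + qq))).
    by ring.
  by apply/zB; apply/zM; [exact: hM | exact: hT2].
right; rewrite -horner_coef0 /Numer /xx /qq !hornerE /=; ring.
Qed.

Lemma hF' : z (Fp - 1 - Bx * Gp - xx ^+ 2 * Tp * Fp).
Proof.
apply: (zE (r := (Fp - 1 - sB * Gp - sC * Fp) + Gp * (sB - Bx) + Fp * (sC - xx ^+ 2 * Tp))).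
  by ring.
apply/zD; first apply/zD.
- exact: zF.
- by apply/zM/zBc.
- by apply/zM/zCc.
Qed.

Lemma hG' : z (Gp - 1 - qq * Bx * Gp - xx ^+ 2 * Tp * Fp).
Proof.
apply: (zE (r := (Gp - 1 - qq * (sB * Gp) - sC * Fp) + qq * Gp * (sB - Bx) + Fp * (sC - xx ^+ 2 * Tp))).
  by ring.
apply/zD; first apply/zD.
- exact: zG.
- by apply/zM/zBc.
- by apply/zM/zCc.
Qed.

Lemma hFM : z (Fp * (1 - xx ^+ 2 * Tp * Mp) - Mp).
Proof.
apply: (@z_cancel _ (1 - qq * Bx)).
  apply: (zE (r := (1 - qq * Bx) * (Fp - 1 - Bx * Gp - xx ^+ 2 * Tp * Fp)
      + Bx * (Gp - 1 - qq * Bx * Gp - xx ^+ 2 * Tp * Fp)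
      + (Fp * xx ^+ 2 * Tp + 1) * (qq * xx ^+ 2 * Mp ^+ 2 - PP * Mp + Numer))).
    by rewrite /Numer; ring.
  apply/zD; first apply/zD.
  - by apply/zM/hF'.
  - by apply/zM/hG'.
  - by apply/zM/hM.
left; rewrite -horner_coef0 /Numer /xx /qq !hornerE /=; ring.
Qed.

Lemma hFS : z (Fp * (PP - 2%:R * qq * xx ^+ 2 * Mp) - Numer).
Proof.
apply: (@z_cancel _ Mp).
  apply: (zE (r := Numer * (Fp * (1 - xx ^+ 2 * Tp * Mp) - Mp)
      - Fp * (qq * xx ^+ 2 * Mp ^+ 2 - PP * Mp + Numer)
      - Fp * xx ^+ 2 * Mp * (qq * Mp - Numer * Tp))).
    by rewrite /Numer; ring.
  apply/zB; first apply/zB.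
  - by apply/zM/hFM.
  - by apply/zM/hM.
  - by apply/zM/hqT.
by left; rewrite coef_ser // M0.
Qed.

Lemma hFinal : z (Fp ^+ 2 * Rad - Numer ^+ 2).
Proof.
apply: (zE (r := (Fp * (PP - 2%:R * qq * xx ^+ 2 * Mp) + Numer) *
                 (Fp * (PP - 2%:R * qq * xx ^+ 2 * Mp) - Numer)
   - 4%:R * Fp ^+ 2 * qq * xx ^+ 2 * (qq * xx ^+ 2 * Mp ^+ 2 - PP * Mp + Numer))).
  by rewrite /Rad /Numer; ring.
apply/zB; first by apply/zM/hFS.
by apply/zM/hM.
Qed.

End Alg.

Lemma Fcoef_Fc n : Fcoef n = Fc n.
Proof.
rewrite /Fcoef /grand_motzkin big_filter /Fc.
by apply: eq_bigr => w _; rewrite stat_pc.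
Qed.

Theorem mainTheorem9 :
  Fcoef 0 = 1 /\
  forall n : nat,
    \sum_(k < n.+1) Fsq_coef (n - k) * Rad`_k = (Numer ^+ 2)`_n.
Proof.
split; first by rewrite Fcoef_Fc F0.
move=> n; have := hFinal (leqnn n); rewrite coefB => /eqP; rewrite subr_eq0 => /eqP <-.
rewrite mulrC coefM; apply: eq_bigr => k _; rewrite mulrC; congr (_ * _).
rewrite expr2 conv; last by rewrite leq_subr.
rewrite /Fsq_coef; apply: eq_bigr => j _.
by rewrite !Fcoef_Fc.
Qed.
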